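(* Let $\mathcal{A}$ be a safe GTA without renamings with clock set $X=X_F\uplus X_H$, and let $M\in\mathbb{N}$ be such that every finite constant $c$ appearing in a guard of $\mathcal{A}$ satisfies $|c|\le M$. Then $\approx_M$ is a time-abstract bisimulation: for all valuations $v_1\approx_M v_2$, (a) for every $\delta_1\ge 0$ such that $v_1+\delta_1$ is a valuation there is $\delta_2\ge 0$ such that $v_2+\delta_2$ is a valuation and $v_1+\delta_1\approx_M v_2+\delta_2$; and (b) for every transition $t$ of $\mathcal{A}$ and state $q$, if $(q,v_1)\xrightarrow{t}(q',v_1')$ then there is $v_2'$ with $(q,v_2)\xrightarrow{t}(q',v_2')$ and $v_1'\approx_M v_2'$ (and symmetrically with the roles of $v_1,v_2$ exchanged).
   Context: Clocks, valuations, constraints: $X=X_F\uplus X_H$ finite, future clocks $X_F$, history clocks $X_H$, plus constant clock $0$. $\overline{\mathbb{R}}=\mathbb{R}\cup\{\pm\infty\}$ with $(+\infty)+\alpha=+\infty$, $(-\infty)+\beta=-\infty$ for $\beta\ne+\infty$, $-(\pm\infty)=\mp\infty$. A valuation $v:X\cup\{0\}\to\overline{\mathbb{R}}$ has $v(0)=0$, history clocks in $\mathbb{R}_{\ge0}\cup\{+\infty\}$, future clocks in $\mathbb{R}_{\le0}\cup\{-\infty\}$. Constraints are conjunctions of $x-y\triangleleft c$ ($x,y\in X\cup\{0\}$, ${\triangleleft}\in\{<,\le\}$, $c\in\mathbb{Z}\cup\{\pm\infty\}$), $v\models x-y\triangleleft c$ iff $v(x)-v(y)\triangleleft c$. $v+\delta$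 adds $\delta$ to every clock; $[R]v$ ($R\subseteq X$) is the set of $v'$ with $v'(x)=0$ for $x\in R\cap X_H$, $v'(x)=v(x)$ for $x\notin R$, arbitrary for $x\in R\cap X_F$. A GTA without renamings $\mathcal{A}=(Q,\Sigma,X,\Delta,\mathcal{I},Q_f)$ has transitions $(q,a,\mathsf{prog},q')$ where $\mathsf{prog}$ is a sequence of guards $g$ (with $v\xrightarrow{g}v$ iff $v\models g$) and changes $[R]$ (with $v\xrightarrow{[R]}v'$ iff $v'\in[R]v$); $(q,v)\xrightarrow{t}(q',v')$ iff $t=(q,a,\mathsf{prog},q')$ and $v\xrightarrow{\mathsf{prog}}v'$. Safety: with $X_D$ the future clocks occurring in guards $x-y\triangleleft c$ with $x,y\in X_F$, every program checks each clock of $X_D$ to be $0$ or $-\infty$ before releasing it, and initial guards force history clocks to $0$ or $+\infty$. For $\alpha\in\mathbb{R}$, $\lfloor\alpha\rfloor$ is its integer part and $\{\alpha\}=\alpha-\lfloor\alpha\rfloor$. Equivalence $\approx_M$: $v_1\approx_M v_2$ iff for all clocks $x,y$: (1) $v_1(x)\triangleleft c$ iff $v_2(x)\triangleleft c$ for all ${\triangleleft}\in\{<,\le\}$ and all $c\in\{-\infty,+\infty\}$ or $c\in\mathbb{Z}$ with $c\le M$; (2) $v_1\models x-y\triangleleft c$ iff $v_2\models x-y\triangleleft c$ for all ${\triangleleft}\in\{<,\le\}$ and $c\in\{\pm\infty\}$ or $c\in\mathbb{Z}$ with $|c|\le M$; (3) if $-\infty<v_1(x),v_1(y)\le M$ then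 $\{v_1(x)\}\le\{v_1(y)\}$ iff $\{v_2(x)\}\le\{v_2(y)\}$. *)

(* Defs.v *)
From Stdlib Require Import Reals ZArith List.
Open Scope R_scope.

Inductive ER := Fin (r : R) | PInf | NInf.

Definition eadd (a b : ER) : ER :=
  match a, b with
  | PInf, _ | _, PInf => PInf
  | NInf, _ | _, NInf => NInf
  | Fin r, Fin s => Fin (r + s)
  end.

Definition eopp (a : ER) : ER :=
  match a with Fin r => Fin (- r) | PInf => NInf | NInf => PInf end.

Definition esub (a b : ER) : ER := eadd a (eopp b).

Definition ele (a b : ER) : Prop :=
  match a, b with
  | NInf, _ => True
  | _, PInf => True
  | Fin r, Fin s => r <= s
  | _, _ => False
  end.

Definition elt (a b : ER) : Prop := ele a b /\ a <> b.

Definition ecmp (strict : bool) (a b : ER) : Prop :=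
  if strict then elt a b else ele a b.

Inductive bnd := BZ (z : Z) | BPInf | BNInf.

Definition bnd_ER (c : bnd) : ER :=
  match c with BZ z => Fin (IZR z) | BPInf => PInf | BNInf => NInf end.

(** * Clocks and valuations.
    C is the clock set X; [isF x = true] iff x ∈ X_F (future clock),
    otherwise x ∈ X_H (history clock).  The constant clock 0 is [None]. *)
Section Clocks.
Variable C : Type.
Variable isF : C -> bool.

Definition valuation := C -> ER.

Definition val (v : valuation) (x : option C) : ER :=
  match x with None => Fin 0 | Some c => v c end.

Definition is_valuation (v : valuation) : Prop :=
  forall x : C,
    if isF x then (v x = NInf \/ exists r, v x = Fin r /\ r <= 0)
    else (v x = PInf \/ exists r, v x = Fin r /\ 0 <= r).

(** atomic constraint  x - y ◁ c *)
Record atom := mkAtom { ax : option C; ay : option C; astrict : bool; ac : bnd }.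

Definition guard := list atom.

Definition sat_atom (v : valuation) (a : atom) : Prop :=
  ecmp (astrict a) (esub (val v (ax a)) (val v (ay a))) (bnd_ER (ac a)).

Definition sat (v : valuation) (g : guard) : Prop := Forall (sat_atom v) g.

Definition delay (v : valuation) (d : R) : valuation := fun x => eadd (v x) (Fin d).

Definition in_change (Rs : list C) (v v' : valuation) : Prop :=
  is_valuation v' /\
  forall x, (In x Rs -> isF x = false -> v' x = Fin 0) /\
            (~ In x Rs -> v' x = v x).

Inductive instr := IGuard (g : guard) | IChange (Rs : list C).
Definition program := list instr.

Fixpoint prog_sem (p : program) (v v' : valuation) : Prop :=
  match p with
  | nil => v' = v
  | IGuard g :: p' => sat v g /\ prog_sem p' v v'
  | IChange Rs :: p' => exists w, in_change Rs v w /\ prog_sem p' w v'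
  end.

End Clocks.

Arguments mkAtom {C}.
Arguments ax {C}.
Arguments ay {C}.
Arguments astrict {C}.
Arguments ac {C}.
Arguments IGuard {C}.
Arguments IChange {C}.

Record transition (Q Sigma C : Type) := mkTrans
  { tsrc : Q; tlab : Sigma; tprog : program C; ttgt : Q }.
Arguments tsrc {Q Sigma C}.
Arguments tlab {Q Sigma C}.
Arguments tprog {Q Sigma C}.
Arguments ttgt {Q Sigma C}.

Record GTA (Q Sigma C : Type) := mkGTA
  { gta_trans : list (transition Q Sigma C);
    gta_init : list (Q * guard C);
    gta_final : Q -> Prop }.
Arguments gta_trans {Q Sigma C}.
Arguments gta_init {Q Sigma C}.
Arguments gta_final {Q Sigma C}.

Section Semantics.
Context {Q Sigma C : Type} (isF : C -> bool).

Definition gstep (t : transition Q Sigma C) (q : Q) (v : valuation C)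
    (q' : Q) (v' : valuation C) : Prop :=
  tsrc t = q /\ ttgt t = q' /\ prog_sem C isF (tprog t) v v'.

Definition guard_of (A : GTA Q Sigma C) (g : guard C) : Prop :=
  (exists q, In (q, g) (gta_init A)) \/
  (exists t, In t (gta_trans A) /\ In (IGuard g) (tprog t)).

Definition is_future (x : option C) : Prop :=
  match x with Some c => isF c = true | None => False end.

Definition in_XD (A : GTA Q Sigma C) (z : C) : Prop :=
  exists g a, guard_of A g /\ In a g /\ is_future (ax a) /\ is_future (ay a) /\
              (ax a = Some z \/ ay a = Some z).

Definition safe (A : GTA Q Sigma C) : Prop :=
  (forall t, In t (gta_trans A) ->
     forall p1 Rs p2, tprog t = p1 ++ IChange Rs :: p2 ->
     forall v w, is_valuation C isF v -> prog_sem C isF p1 v w ->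
     forall z, In z Rs -> in_XD A z -> isF z = true ->
       w z = Fin 0 \/ w z = NInf) /\
  (forall q g, In (q, g) (gta_init A) ->
     forall v, is_valuation C isF v -> sat C v g ->
     forall x, isF x = false -> v x = Fin 0 \/ v x = PInf).

Definition consts_bounded (A : GTA Q Sigma C) (M : nat) : Prop :=
  forall g a z, guard_of A g -> In a g -> ac a = BZ z ->
    (Z.abs z <= Z.of_nat M)%Z.

End Semantics.

Definition bnd_le_M (M : nat) (c : bnd) : Prop :=
  match c with BZ z => (z <= Z.of_nat M)%Z | _ => True end.

Definition bnd_abs_le_M (M : nat) (c : bnd) : Prop :=
  match c with BZ z => (Z.abs z <= Z.of_nat M)%Z | _ => True end.

(** {α} = α - ⌊α⌋   (Stdlib: frac_part r = r - IZR (Int_part r), Int_part = floor) *)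
Definition approxM {C : Type} (M : nat) (v1 v2 : valuation C) : Prop :=
  (forall (x : option C) (s : bool) (c : bnd), bnd_le_M M c ->
     (ecmp s (val C v1 x) (bnd_ER c) <-> ecmp s (val C v2 x) (bnd_ER c))) /\
  (forall (x y : option C) (s : bool) (c : bnd), bnd_abs_le_M M c ->
     (ecmp s (esub (val C v1 x) (val C v1 y)) (bnd_ER c) <->
      ecmp s (esub (val C v2 x) (val C v2 y)) (bnd_ER c))) /\
  (forall (x y : option C) (r1 r2 s1 s2 : R),
     val C v1 x = Fin r1 -> val C v1 y = Fin r2 ->
     r1 <= INR M -> r2 <= INR M ->
     val C v2 x = Fin s1 -> val C v2 y = Fin s2 ->
     (frac_part r1 <= frac_part r2 <-> frac_part s1 <= frac_part s2)).

(* Main.v *)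
Require Import Defs.
From Stdlib Require Import Reals ZArith List Lra Lia Classical ClassicalEpsilon FunctionalExtensionality.
Open Scope R_scope.

Lemma fl_spec r : IZR (Int_part r) <= r < IZR (Int_part r) + 1.
Proof. destruct (base_Int_part r). lra. Qed.

Lemma frac_eq r : frac_part r = r - IZR (Int_part r).
Proof. reflexivity. Qed.

Lemma frac_bounds r : 0 <= frac_part r < 1.
Proof. rewrite frac_eq. pose proof (fl_spec r). lra. Qed.

Lemma fl_unique z r : IZR z <= r < IZR z + 1 -> Int_part r = z.
Proof.
  intros [H1 H2]. pose proof (fl_spec r) as [H3 H4].
  assert (A1 : (z < Int_part r + 1)%Z).
  { apply lt_IZR. rewrite plus_IZR. simpl. lra. }
  assert (A2 : (Int_part r < z + 1)%Z).
  { apply lt_IZR. rewrite plus_IZR. simpl. lra. }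
  lia.
Qed.

Lemma frac_int z : frac_part (IZR z) = 0.
Proof. rewrite frac_eq. rewrite (fl_unique z). lra. lra. Qed.

Lemma lt_int r z : r < IZR z <-> (Int_part r < z)%Z.
Proof.
  pose proof (fl_spec r). split; intro H'.
  - apply lt_IZR. lra.
  - assert (IZR (Int_part r) + 1 <= IZR z).
    { replace 1 with (IZR 1) by reflexivity. rewrite <- plus_IZR. apply IZR_le. lia. }
    lra.
Qed.

Lemma le_int r z : r <= IZR z <-> ((Int_part r < z)%Z \/ (Int_part r = z /\ frac_part r = 0)).
Proof.
  split; intro H.
  - destruct (Rlt_dec r (IZR z)) as [h|h].
    + left. apply lt_int. exact h.
    + right. assert (r = IZR z) by lra. subst r. split.
      apply fl_unique; lra. apply frac_int.
  - destruct H as [h|[h1 h2]].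
    + apply lt_int in h. lra.
    + rewrite frac_eq in h2. subst z. lra.
Qed.

Definition SR (r s : R) : Prop := Int_part r = Int_part s /\ (frac_part r = 0 <-> frac_part s = 0).

Lemma SR_cmp r s : SR r s -> forall z, (r <= IZR z <-> s <= IZR z) /\ (r < IZR z <-> s < IZR z).
Proof.
  intros [H1 H2] z. rewrite !le_int, !lt_int, H1. tauto.
Qed.

Lemma SR_cmp2 r s : SR r s -> forall z, (IZR z <= r <-> IZR z <= s) /\ (IZR z < r <-> IZR z < s).
Proof.
  intros H z. destruct (SR_cmp r s H z) as [A B]. split; split; intro h.
  - destruct (Rle_dec (IZR z) s); auto. exfalso. assert (s < IZR z) by lra. apply B in H0. lra.
  - destruct (Rle_dec (IZR z) r); auto. exfalso. assert (r < IZR z) by lra. apply B in H0. lra.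
  - destruct (Rlt_dec (IZR z) s); auto. exfalso. assert (s <= IZR z) by lra. apply A in H0. lra.
  - destruct (Rlt_dec (IZR z) r); auto. exfalso. assert (r <= IZR z) by lra. apply A in H0. lra.
Qed.

Lemma SR_of_cmp (K : Z) r s :
  (forall z, (z <= K)%Z -> (r <= IZR z <-> s <= IZR z) /\ (r < IZR z <-> s < IZR z)) ->
  r <= IZR K -> s <= IZR K -> SR r s.
Proof.
  intros H Hr Hs. pose proof (fl_spec r) as [a1 a2]. pose proof (fl_spec s) as [b1 b2].
  assert (Kr : (Int_part r <= K)%Z) by (apply le_IZR; lra).
  assert (Ks : (Int_part s <= K)%Z) by (apply le_IZR; lra).
  assert (E : Int_part r = Int_part s).
  { assert (h1 : IZR (Int_part r) <= s).
    { destruct (Rle_dec (IZR (Int_part r)) s); auto. exfalso.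
      assert (s < IZR (Int_part r)) by lra. apply (H _ Kr) in H0. lra. }
    assert (h2 : IZR (Int_part s) <= r).
    { destruct (Rle_dec (IZR (Int_part s)) r); auto. exfalso.
      assert (r < IZR (Int_part s)) by lra. apply (H _ Ks) in H0. lra. }
    assert ((Int_part r < Int_part s + 1)%Z) by (apply lt_IZR; rewrite plus_IZR; simpl; lra).
    assert ((Int_part s < Int_part r + 1)%Z) by (apply lt_IZR; rewrite plus_IZR; simpl; lra).
    lia. }
  split; auto. rewrite !frac_eq. split; intro h.
  - assert (r <= IZR (Int_part r)) by lra. apply (H _ Kr) in H0. rewrite E in H0. lra.
  - assert (s <= IZR (Int_part s)) by lra. rewrite <- E in H0. apply (H _ Kr) in H0. lra.
Qed.

Lemma shift_hi a z u : 0 <= u < 1 -> u <= frac_part a ->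
  Int_part (a + IZR z - u) = (Int_part a + z)%Z /\ frac_part (a + IZR z - u) = frac_part a - u.
Proof.
  intros Hu H. pose proof (frac_bounds a). rewrite frac_eq in *.
  assert (E : Int_part (a + IZR z - u) = (Int_part a + z)%Z).
  { apply fl_unique. rewrite plus_IZR. lra. }
  split; auto. rewrite frac_eq, E, plus_IZR. lra.
Qed.

Lemma shift_lo a z u : 0 <= u < 1 -> frac_part a < u ->
  Int_part (a + IZR z - u) = (Int_part a + z - 1)%Z /\ frac_part (a + IZR z - u) = frac_part a - u + 1.
Proof.
  intros Hu H. pose proof (frac_bounds a). rewrite frac_eq in *.
  assert (E : Int_part (a + IZR z - u) = (Int_part a + z - 1)%Z).
  { apply fl_unique. rewrite minus_IZR, plus_IZR. simpl. lra. }
  split; auto. rewrite frac_eq, E, minus_IZR, plus_IZR. simpl. lra.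
Qed.

Lemma ecmp_Fin s r t : ecmp s (Fin r) (Fin t) <-> (if s then r < t else r <= t).
Proof.
  destruct s; simpl; unfold elt, ele; split.
  - intros [h1 h2]. destruct h1; auto. subst; congruence.
  - intros h. split; [lra| intro E; inversion E; lra].
  - auto.
  - auto.
Qed.

Lemma ecmp_FinP s r : ecmp s (Fin r) PInf.
Proof. destruct s; simpl; unfold elt, ele; auto. split; auto; discriminate. Qed.
Lemma ecmp_FinN s r : ~ ecmp s (Fin r) NInf.
Proof. destruct s; simpl; unfold elt, ele; tauto. Qed.

Definition Mr (M : nat) := IZR (Z.of_nat M).

Definition Reg (M : nat) (e1 e2 : ER) : Prop :=
  match e1, e2 with
  | PInf, PInf => True
  | NInf, NInf => True
  | Fin r, Fin s => (Mr M < r /\ Mr M < s) \/ (r <= Mr M /\ s <= Mr M /\ SR r s)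
  | _, _ => False
  end.

Definition cond1 (M : nat) (e1 e2 : ER) : Prop :=
  forall s c, bnd_le_M M c -> (ecmp s e1 (bnd_ER c) <-> ecmp s e2 (bnd_ER c)).

Lemma fin_lift (M : nat) r1 r2 :
  (forall z, (z <= Z.of_nat M)%Z -> (r1 <= IZR z <-> r2 <= IZR z) /\ (r1 < IZR z <-> r2 < IZR z)) ->
  cond1 M (Fin r1) (Fin r2).
Proof.
  intros H s c Hc. destruct c; simpl.
  - rewrite !ecmp_Fin. destruct (H z Hc). destruct s; auto.
  - split; intros; apply ecmp_FinP.
  - split; intro h; apply ecmp_FinN in h; contradiction.
Qed.

Lemma fin_lift_abs (M : nat) r1 r2 :
  (forall z, (Z.abs z <= Z.of_nat M)%Z -> (r1 <= IZR z <-> r2 <= IZR z) /\ (r1 < IZR z <-> r2 < IZR z)) ->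
  forall s c, bnd_abs_le_M M c -> (ecmp s (Fin r1) (bnd_ER c) <-> ecmp s (Fin r2) (bnd_ER c)).
Proof.
  intros H s c Hc. destruct c; simpl.
  - rewrite !ecmp_Fin. destruct (H z Hc). destruct s; auto.
  - split; intros; apply ecmp_FinP.
  - split; intro h; apply ecmp_FinN in h; contradiction.
Qed.

Lemma Reg_cond1 M e1 e2 : Reg M e1 e2 -> cond1 M e1 e2.
Proof.
  destruct e1 as [r| |], e2 as [s| |]; simpl; try tauto.
  - intros [[h1 h2]|[h1 [h2 h3]]]; apply fin_lift; intros z Hz;
      assert (IZR z <= Mr M) by (apply IZR_le; exact Hz).
    + lra.
    + apply SR_cmp; auto.
  - intros _ s c _; tauto.
  - intros _ s c _; tauto.
Qed.

Lemma cond1_Reg M e1 e2 : cond1 M e1 e2 -> Reg M e1 e2.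
Proof.
  intro H.
  pose proof (H true BPInf I) as H1. pose proof (H false BNInf I) as H2.
  simpl in H1, H2. unfold elt, ele in H1, H2.
  destruct e1 as [r| |], e2 as [s| |]; simpl; auto.
  all: try (exfalso; assert (PInf = PInf) by reflexivity; assert (forall r, Fin r <> PInf) by discriminate; firstorder; fail).
  - pose proof (H false (BZ (Z.of_nat M)) (Z.le_refl _)) as H3. cbn [bnd_ER] in H3.
    rewrite ecmp_Fin in H3. fold (Mr M) in H3.
    destruct (Rle_dec r (Mr M)) as [h|h].
    + right. assert (s <= Mr M) by tauto. split; auto. split; auto.
      apply (SR_of_cmp (Z.of_nat M)); auto.
      intros z Hz. pose proof (H false (BZ z) Hz) as A. pose proof (H true (BZ z) Hz) as B.
      cbn [bnd_ER] in A, B. rewrite !ecmp_Fin in A, B. split; assumption.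
    + left. split. lra. destruct (Rle_dec s (Mr M)); [tauto|lra].
Qed.

Lemma max_exists {T} (l : list T) (P : T -> Prop) (k : T -> R) :
  (exists i, In i l /\ P i) -> exists i, In i l /\ P i /\ forall j, In j l -> P j -> k j <= k i.
Proof.
  induction l as [|a l IH]; intros [i [Hi Pi]].
  - destruct Hi.
  - destruct (classic (exists i, In i l /\ P i)) as [Hl|Hl].
    + destruct (IH Hl) as [m [Hm [Pm Km]]].
      destruct (classic (P a /\ k m < k a)) as [Ha|Ha].
      * exists a. split; [left; auto|]. split; [tauto|]. intros j [E|Hj] Pj; [subst j|]. lra.
        specialize (Km j Hj Pj). lra.
      * exists m. split; [right; auto|]. split; auto. intros j [E|Hj] Pj; [subst j|auto].
        destruct (Rle_dec (k a) (k m)); auto. exfalso; apply Ha; split; auto; lra.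
    + assert (Pa : P a).
      { destruct Hi as [<-|Hi]; auto. exfalso; apply Hl; eauto. }
      exists a. split; [left; auto|]. split; auto. intros j [E|Hj] Pj; [subst j|]. lra.
      exfalso; apply Hl; eauto.
Qed.

Lemma min_exists {T} (l : list T) (P : T -> Prop) (k : T -> R) :
  (exists i, In i l /\ P i) -> exists i, In i l /\ P i /\ forall j, In j l -> P j -> k i <= k j.
Proof.
  intro H. destruct (max_exists l P (fun x => - k x) H) as [i [A [B C]]].
  exists i. split; auto. split; auto. intros j Hj Pj. specialize (C j Hj Pj). lra.
Qed.

Lemma ext_point {T} (l : list T) (P : T -> Prop) (f g : T -> R)
  (H : forall i j, In i l -> P i -> In j l -> P j -> (f i <= f j <-> g i <= g j)) (u : R) :
  exists w, forall i, In i l -> P i -> (f i <= u <-> g i <= w) /\ (u <= f i <-> w <= g i).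
Proof.
  destruct (classic (exists i, In i l /\ P i /\ f i = u)) as [[i0 [Hi [Pi E]]] | Hn].
  - exists (g i0). intros j Hj Pj. subst u. split; [apply H | apply H]; auto.
  - assert (Hne : forall j, In j l -> P j -> f j < u \/ u < f j).
    { intros j Hj Pj. destruct (Rtotal_order (f j) u) as [h|[h|h]]; auto.
      exfalso; apply Hn; eauto. }
    destruct (classic (exists i, In i l /\ (P i /\ f i < u))) as [lo|nlo];
    destruct (classic (exists i, In i l /\ (P i /\ u < f i))) as [hi|nhi].
    + destruct (max_exists _ _ f lo) as [i1 [I1 [[P1 L1] M1]]].
      destruct (min_exists _ _ f hi) as [i2 [I2 [[P2 L2] M2]]].
      assert (G12 : g i1 < g i2).
      { destruct (Rlt_dec (g i1) (g i2)); auto. exfalso.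
        assert (g i2 <= g i1) by lra. apply (H i2 i1) in H0; auto. lra. }
      exists ((g i1 + g i2) / 2). intros j Hj Pj.
      destruct (Hne j Hj Pj) as [h|h].
      * assert (f j <= f i1) by (apply M1; auto).
        assert (g j <= g i1) by (apply (H j i1); auto).
        split; split; intro; lra.
      * assert (f i2 <= f j) by (apply M2; auto).
        assert (g i2 <= g j) by (apply (H i2 j); auto).
        split; split; intro; lra.
    + destruct (max_exists _ _ f lo) as [i1 [I1 [[P1 L1] M1]]].
      exists (g i1 + 1). intros j Hj Pj.
      destruct (Hne j Hj Pj) as [h|h].
      * assert (f j <= f i1) by (apply M1; auto).
        assert (g j <= g i1) by (apply (H j i1); auto).
        split; split; intro; lra.
      * exfalso; apply nhi; eauto.
    + destruct (min_exists _ _ f hi) as [i2 [I2 [[P2 L2] M2]]].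
      exists (g i2 - 1). intros j Hj Pj.
      destruct (Hne j Hj Pj) as [h|h].
      * exfalso; apply nlo; eauto.
      * assert (f i2 <= f j) by (apply M2; auto).
        assert (g i2 <= g j) by (apply (H i2 j); auto).
        split; split; intro; lra.
    + exists 0. intros j Hj Pj. destruct (Hne j Hj Pj) as [h|h]; exfalso; [apply nlo|apply nhi]; eauto.
Qed.

Lemma Mr_INR M : INR M = Mr M.
Proof. unfold Mr. apply INR_IZR_INZ. Qed.

Lemma Mr_pos M : 0 <= Mr M.
Proof. unfold Mr. apply (IZR_le 0). lia. Qed.

Lemma abs_bounds M z : (Z.abs z <= Z.of_nat M)%Z -> - Mr M <= IZR z <= Mr M.
Proof.
  intro H. unfold Mr. rewrite <- opp_IZR. split; apply IZR_le; lia.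
Qed.

Lemma Reg_sub0 M e1 e2 : Reg M e1 e2 -> forall s c, bnd_abs_le_M M c ->
  (ecmp s (esub e1 (Fin 0)) (bnd_ER c) <-> ecmp s (esub e2 (Fin 0)) (bnd_ER c)).
Proof.
  destruct e1 as [r| |], e2 as [t| |]; simpl; try tauto.
  intros HR. apply fin_lift_abs. intros z Hz. pose proof (abs_bounds M z Hz).
  destruct HR as [[h1 h2]|[h1 [h2 h3]]].
  - split; split; intro; lra.
  - destruct (SR_cmp r t h3 z). replace (r + - 0) with r by ring. replace (t + - 0) with t by ring. auto.
Qed.

Lemma Reg_0sub M e1 e2 : Reg M e1 e2 -> forall s c, bnd_abs_le_M M c ->
  (ecmp s (esub (Fin 0) e1) (bnd_ER c) <-> ecmp s (esub (Fin 0) e2) (bnd_ER c)).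
Proof.
  destruct e1 as [r| |], e2 as [t| |]; simpl; try tauto.
  intros HR. apply fin_lift_abs. intros z Hz. pose proof (abs_bounds M z Hz).
  destruct HR as [[h1 h2]|[h1 [h2 h3]]].
  - split; split; intro; lra.
  - destruct (SR_cmp2 r t h3 (- z)) as [A B]. rewrite opp_IZR in A, B.
    split; split; intro h.
    + destruct (Rle_dec (0 + - t) (IZR z)); auto. exfalso. assert (- IZR z < r) by lra.
      apply B in H0. lra.
    + destruct (Rle_dec (0 + - r) (IZR z)); auto. exfalso. assert (- IZR z < t) by lra.
      apply B in H0. lra.
    + assert (- IZR z < r) by lra. apply B in H0. lra.
    + assert (- IZR z < t) by lra. apply B in H0. lra.
Qed.

Section Ap.
Variable C : Type.
Variable M : nat.

Definition cond3 (v1 v2 : valuation C) : Prop :=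
  forall (x y : option C) (r1 r2 s1 s2 : R),
     val C v1 x = Fin r1 -> val C v1 y = Fin r2 ->
     r1 <= INR M -> r2 <= INR M ->
     val C v2 x = Fin s1 -> val C v2 y = Fin s2 ->
     (frac_part r1 <= frac_part r2 <-> frac_part s1 <= frac_part s2).

Definition cond2s (v1 v2 : valuation C) : Prop :=
  forall (x y : C) (s : bool) (c : bnd), bnd_abs_le_M M c ->
     (ecmp s (esub (v1 x) (v1 y)) (bnd_ER c) <-> ecmp s (esub (v2 x) (v2 y)) (bnd_ER c)).

Lemma approx_Reg v1 v2 : approxM M v1 v2 -> forall x, Reg M (val C v1 x) (val C v2 x).
Proof. intros [H1 _] x. apply cond1_Reg. intros s c Hc. apply H1; auto. Qed.

Lemma approx_c2 (v1 v2 : valuation C) : approxM M v1 v2 -> cond2s v1 v2.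
Proof. intros [_ [H2 _]] x y. apply (H2 (Some x) (Some y)). Qed.

Lemma approx_c3 (v1 v2 : valuation C) : approxM M v1 v2 -> cond3 v1 v2.
Proof. intros [_ [_ H3]]. exact H3. Qed.

Lemma approx_intro (v1 v2 : valuation C) :
  (forall x, Reg M (val C v1 x) (val C v2 x)) -> cond2s v1 v2 -> cond3 v1 v2 -> approxM M v1 v2.
Proof.
  intros HR H2 H3. split; [|split]; auto.
  - intros x s c Hc. apply (Reg_cond1 M _ _ (HR x)); auto.
  - intros [x|] [y|] s c Hc; simpl.
    + apply H2; auto.
    + apply (Reg_sub0 M _ _ (HR (Some x))); auto.
    + apply (Reg_0sub M _ _ (HR (Some y))); auto.
    + tauto.
Qed.

Lemma approx_sym (v1 v2 : valuation C) : approxM M v1 v2 -> approxM M v2 v1.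
Proof.
  intro H. pose proof (approx_Reg _ _ H) as HR. destruct H as [H1 [H2 H3]].
  split; [|split].
  - intros; symmetry; auto.
  - intros; symmetry; auto.
  - intros x y r1 r2 s1 s2 E1 E2 L1 L2 F1 F2.
    pose proof (HR x) as Rx. pose proof (HR y) as Ry.
    rewrite E1, F1 in Rx. rewrite E2, F2 in Ry. simpl in Rx, Ry.
    rewrite Mr_INR in *.
    assert (s1 <= Mr M) by (destruct Rx as [[a b]|[a [b c]]]; lra).
    assert (s2 <= Mr M) by (destruct Ry as [[a b]|[a [b c]]]; lra).
    symmetry. apply (H3 x y); auto; rewrite Mr_INR; auto.
Qed.

Lemma fut_valid_iff e : (e = NInf \/ exists r, e = Fin r /\ r <= 0) <-> ecmp false e (bnd_ER (BZ 0)).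
Proof.
  destruct e as [r| |]; simpl; split; intro H; auto.
  - destruct H as [H|[r' [E H]]]; [discriminate|]. injection E; intros; subst; auto.
  - right; exists r; auto.
  - destruct H as [H|[r' [E H]]]; discriminate.
  - destruct H.
Qed.

Lemma hist_valid_iff e : (e = PInf \/ exists r, e = Fin r /\ 0 <= r) <-> ~ ecmp true e (bnd_ER (BZ 0)).
Proof.
  destruct e as [r| |]; simpl; unfold elt, ele; split; intro H; auto.
  - destruct H as [H|[r' [E H]]]; [discriminate|]. injection E; intros; subst.
    intros [a b]. destruct a; [lra| congruence].
  - right; exists r; split; auto. destruct (Rle_dec 0 r); auto. exfalso; apply H; split.
    left; lra. intro E; injection E; lra.
  - tauto.
  - destruct H as [H|[r' [E H]]]; discriminate.
  - exfalso; apply H; split; auto; discriminate.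
Qed.

Lemma approx_valid (isF : C -> bool) (v1 v2 : valuation C) :
  is_valuation C isF v1 -> approxM M v1 v2 -> is_valuation C isF v2.
Proof.
  intros Hv [H1 _] x. specialize (Hv x).
  assert (Hc : bnd_le_M M (BZ 0)) by (simpl; lia).
  pose proof (H1 (Some x) false (BZ 0) Hc) as A. pose proof (H1 (Some x) true (BZ 0) Hc) as B.
  simpl in A, B.
  destruct (isF x).
  - apply fut_valid_iff. apply fut_valid_iff in Hv. simpl in *. tauto.
  - apply hist_valid_iff. apply hist_valid_iff in Hv. simpl in *. tauto.
Qed.

End Ap.

Lemma small_delay a b u w n : 0 <= u < 1 -> 0 <= w < 1 -> SR a b ->
  (frac_part a <= u <-> frac_part b <= w) -> (u <= frac_part a <-> w <= frac_part b) ->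
  SR (a + IZR n - u) (b + IZR n - w).
Proof.
  intros Hu Hw [E Z] A B. pose proof (frac_bounds a). pose proof (frac_bounds b).
  destruct (Rle_dec u (frac_part a)) as [h|h].
  - assert (h' : w <= frac_part b) by tauto.
    destruct (shift_hi a n u Hu h) as [F1 G1]. destruct (shift_hi b n w Hw h') as [F2 G2].
    split. rewrite F1, F2, E. reflexivity. rewrite G1, G2.
    split; intro k.
    + assert (frac_part a <= u) by lra. apply A in H1. lra.
    + assert (frac_part b <= w) by lra. apply A in H1. lra.
  - assert (h1 : frac_part a < u) by lra.
    assert (h' : frac_part b < w).
    { destruct (Rlt_dec (frac_part b) w); auto. exfalso. apply h. apply B. lra. }
    destruct (shift_lo a n u Hu h1) as [F1 G1]. destruct (shift_lo b n w Hw h') as [F2 G2].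
    split. rewrite F1, F2, E. reflexivity. rewrite G1, G2. split; intro; lra.
Qed.

Lemma delayed_frac_cmp a a' b b' u w n : 0 <= u < 1 -> 0 <= w < 1 ->
  (frac_part a <= frac_part a' <-> frac_part b <= frac_part b') ->
  (u <= frac_part a <-> w <= frac_part b) -> (u <= frac_part a' <-> w <= frac_part b') ->
  (frac_part (a + IZR n - u) <= frac_part (a' + IZR n - u) <->
   frac_part (b + IZR n - w) <= frac_part (b' + IZR n - w)).
Proof.
  intros Hu Hw O S1 S2.
  pose proof (frac_bounds a). pose proof (frac_bounds b).
  pose proof (frac_bounds a'). pose proof (frac_bounds b').
  assert (Q : forall x y : R, (x <= y) \/ (y < x)) by (intros; destruct (Rle_dec x y); [left|right]; lra).
  destruct (Q u (frac_part a)) as [h1|h1]; destruct (Q u (frac_part a')) as [h2|h2].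
  - assert (k1 : w <= frac_part b) by tauto. assert (k2 : w <= frac_part b') by tauto.
    rewrite (proj2 (shift_hi a n u Hu h1)), (proj2 (shift_hi a' n u Hu h2)),
      (proj2 (shift_hi b n w Hw k1)), (proj2 (shift_hi b' n w Hw k2)).
    split; intro k; [assert (frac_part a <= frac_part a') by lra | assert (frac_part b <= frac_part b') by lra];
      [apply O in H3 | apply O in H3]; lra.
  - assert (k1 : w <= frac_part b) by tauto.
    assert (k2 : frac_part b' < w) by (destruct (Q w (frac_part b')); [exfalso; apply S2 in H3; lra| auto]).
    rewrite (proj2 (shift_hi a n u Hu h1)), (proj2 (shift_lo a' n u Hu h2)),
      (proj2 (shift_hi b n w Hw k1)), (proj2 (shift_lo b' n w Hw k2)).
    split; intro; lra.
  - assert (k2 : w <= frac_part b') by tauto.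
    assert (k1 : frac_part b < w) by (destruct (Q w (frac_part b)); [exfalso; apply S1 in H3; lra| auto]).
    rewrite (proj2 (shift_lo a n u Hu h1)), (proj2 (shift_hi a' n u Hu h2)),
      (proj2 (shift_lo b n w Hw k1)), (proj2 (shift_hi b' n w Hw k2)).
    split; intro; lra.
  - assert (k1 : frac_part b < w) by (destruct (Q w (frac_part b)); [exfalso; apply S1 in H3; lra| auto]).
    assert (k2 : frac_part b' < w) by (destruct (Q w (frac_part b')); [exfalso; apply S2 in H3; lra| auto]).
    rewrite (proj2 (shift_lo a n u Hu h1)), (proj2 (shift_lo a' n u Hu h2)),
      (proj2 (shift_lo b n w Hw k1)), (proj2 (shift_lo b' n w Hw k2)).
    split; intro k; [assert (frac_part a <= frac_part a') by lra | assert (frac_part b <= frac_part b') by lra];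
      [apply O in H3 | apply O in H3]; lra.
Qed.

Lemma Reg_of_SR M r s : SR r s -> Reg M (Fin r) (Fin s).
Proof.
  intro H. simpl. destruct (SR_cmp r s H (Z.of_nat M)) as [A B]. fold (Mr M) in A, B.
  destruct (Rle_dec r (Mr M)).
  - right. split; auto. split; auto. tauto.
  - left. split. lra. destruct (Rle_dec s (Mr M)); [tauto|lra].
Qed.

Lemma esub_delay a b d : esub (eadd a (Fin d)) (eadd b (Fin d)) = esub a b.
Proof. destruct a, b; simpl; auto. f_equal; ring. Qed.

Lemma frac0 : frac_part 0 = 0.
Proof. apply (frac_int 0). Qed.

Lemma SR_refl r : SR r r.
Proof. split; tauto. Qed.

Lemma delay_sim (C : Type) (M : nat) (Cfin : exists l : list C, forall x : C, In x l)
  (v1 v2 : valuation C) (d1 : R) :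
  approxM M v1 v2 -> 0 <= d1 -> exists d2, 0 <= d2 /\ approxM M (delay C v1 d1) (delay C v2 d2).
Proof.
  intros H Hd1. destruct Cfin as [l Hl].
  pose proof (approx_Reg C M v1 v2 H) as HR.
  pose proof (approx_c3 C M v1 v2 H) as H3.
  set (L := None :: map Some (None :: map Some l) : list (option (option C))).
  assert (HL : forall x, In (Some x) L).
  { intros [x|]; unfold L; right; apply in_map; [right; apply in_map; auto | left; auto]. }
  set (P := fun i : option (option C) => match i with None => True | Some x =>
              exists r s, val C v1 x = Fin r /\ r <= Mr M /\ val C v2 x = Fin s end).
  set (f := fun i : option (option C) => match i with None => 1 | Some x =>
              match val C v1 x with Fin r => frac_part r | _ => 0 end end).
  set (g := fun i : option (option C) => match i with None => 1 | Some x =>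
              match val C v2 x with Fin r => frac_part r | _ => 0 end end).
  assert (HO : forall i j, In i L -> P i -> In j L -> P j -> (f i <= f j <-> g i <= g j)).
  { intros [x|] [y|] _ Pi _ Pj; simpl in Pi, Pj |- *.
    - destruct Pi as [r1 [s1 [E1 [L1 F1]]]]. destruct Pj as [r2 [s2 [E2 [L2 F2]]]].
      rewrite E1, E2, F1, F2. apply (H3 x y); auto; rewrite Mr_INR; auto.
    - destruct Pi as [r1 [s1 [E1 [L1 F1]]]]. rewrite E1, F1.
      pose proof (frac_bounds r1). pose proof (frac_bounds s1). split; intro; lra.
    - destruct Pj as [r2 [s2 [E2 [L2 F2]]]]. rewrite E2, F2.
      pose proof (frac_bounds r2). pose proof (frac_bounds s2). split; intro; lra.
    - tauto. }
  set (u := frac_part (- d1)).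
  set (n1 := (- Int_part (- d1))%Z).
  assert (Hu : 0 <= u < 1) by apply frac_bounds.
  assert (Ed1 : d1 = IZR n1 - u).
  { unfold u, n1. rewrite frac_eq, opp_IZR. ring. }
  destruct (ext_point L P f g HO u) as [w Hw].
  assert (Hw1 : w < 1).
  { destruct (Hw None) as [A B]; [left; auto| simpl; auto|]. simpl in A.
    destruct (Rlt_dec w 1); auto. exfalso. assert (1 <= w) by lra. apply A in H0. lra. }
  assert (Hw0 : 0 <= w /\ (u <= 0 <-> w <= 0)).
  { destruct (Hw (Some None)) as [A B]; [apply HL| simpl; exists 0, 0; split; auto; split; auto; apply Mr_pos|].
    simpl in A, B. rewrite frac0 in A, B. split; [apply A; lra | tauto]. }
  set (d2 := IZR n1 - w).
  assert (Hd2 : 0 <= d2).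
  { unfold d2. destruct (Req_dec u 0) as [e|e].
    - assert (w = 0) by (destruct Hw0 as [a b]; assert (w <= 0) by (apply b; lra); lra).
      lra.
    - assert (0 < IZR n1) by lra. apply lt_IZR in H0.
      assert ((1 <= n1)%Z) by lia. apply IZR_le in H1. simpl in H1. lra. }
  assert (Hw' : 0 <= w < 1) by lra.
  assert (Hext : forall c a b, v1 c = Fin a -> v2 c = Fin b -> a <= Mr M ->
            (frac_part a <= u <-> frac_part b <= w) /\ (u <= frac_part a <-> w <= frac_part b)).
  { intros c a b E1 E2 La. destruct (Hw (Some (Some c))) as [A B]; [apply HL| |].
    - simpl. exists a, b. auto.
    - simpl in A, B. rewrite E1, E2 in A, B. auto. }
  exists d2. split; auto.
  apply approx_intro.
  - intros [c|]; simpl.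
    + pose proof (HR (Some c)) as Rc. simpl in Rc.
      unfold delay. destruct (v1 c) as [a| |] eqn:E1, (v2 c) as [b| |] eqn:E2; simpl in Rc |- *; try tauto.
      destruct Rc as [[h1 h2]|[h1 [h2 h3]]].
      * left. pose proof Hd2. pose proof Hd1. lra.
      * apply Reg_of_SR. rewrite Ed1. unfold d2.
        replace (a + (IZR n1 - u)) with (a + IZR n1 - u) by ring.
        replace (b + (IZR n1 - w)) with (b + IZR n1 - w) by ring.
        destruct (Hext c a b E1 E2 h1). apply small_delay; auto.
    + right. split. apply Mr_pos. split. apply Mr_pos. apply SR_refl.
  - intros x y s c Hc. unfold delay. rewrite !esub_delay. apply (approx_c2 C M v1 v2 H); auto.
  - assert (Hdesc : forall x r1 s1, val C (delay C v1 d1) x = Fin r1 -> r1 <= INR M ->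
               val C (delay C v2 d2) x = Fin s1 ->
               (r1 = 0 /\ s1 = 0) \/
               (exists c a b, v1 c = Fin a /\ v2 c = Fin b /\ a <= Mr M /\
                  r1 = a + IZR n1 - u /\ s1 = b + IZR n1 - w /\ SR a b /\
                  (frac_part a <= u <-> frac_part b <= w) /\ (u <= frac_part a <-> w <= frac_part b))).
    { intros [c|] r1 s1 E1 L1 F1; simpl in E1, F1.
      - right. unfold delay in E1, F1. rewrite Mr_INR in L1.
        destruct (v1 c) as [a| |] eqn:Ea; simpl in E1; try discriminate.
        destruct (v2 c) as [b| |] eqn:Eb; simpl in F1; try discriminate.
        injection E1; injection F1; intros e1 e2; subst r1 s1.
        pose proof (HR (Some c)) as Rc. simpl in Rc. rewrite Ea, Eb in Rc. simpl in Rc.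
        assert (La : a <= Mr M) by lra.
        destruct Rc as [[h1 h2]|[h1 [h2 h3]]]; [lra|].
        exists c, a, b. split; auto. split; auto. split; auto.
        split; [rewrite Ed1; ring|]. split; [unfold d2; ring|]. split; auto.
        apply (Hext c a b Ea Eb La).
      - left. injection E1; injection F1; intros e1 e2; subst r1 s1; auto. }
    intros x y r1 r2 s1 s2 E1 E2 L1 L2 F1 F2.
    destruct (Hdesc x r1 s1 E1 L1 F1) as [[-> ->]|[c [a [b [Ea [Eb [La [-> [-> [Sab [A1 A2]]]]]]]]]]];
    destruct (Hdesc y r2 s2 E2 L2 F2) as [[-> ->]|[c' [a' [b' [Ea' [Eb' [La' [-> [-> [Sab' [B1 B2]]]]]]]]]]].
    + tauto.
    + rewrite frac0. pose proof (frac_bounds (a' + IZR n1 - u)). pose proof (frac_bounds (b' + IZR n1 - w)).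
      split; intro; lra.
    + rewrite frac0. pose proof (small_delay a b u w n1 Hu Hw' Sab A1 A2) as [_ Z].
      pose proof (frac_bounds (a + IZR n1 - u)). pose proof (frac_bounds (b + IZR n1 - w)).
      split; intro.
      * assert (zz : frac_part (a + IZR n1 - u) = 0) by lra. apply Z in zz. lra.
      * assert (zz : frac_part (b + IZR n1 - w) = 0) by lra. apply Z in zz. lra.
    + apply delayed_frac_cmp; auto.
      apply (H3 (Some c) (Some c')); simpl; auto; rewrite Mr_INR; auto.
Qed.

Lemma diff_det r1 r2 t1 t2 : SR r1 r2 -> SR t1 t2 ->
  (frac_part r1 <= frac_part t1 <-> frac_part r2 <= frac_part t2) ->
  (frac_part t1 <= frac_part r1 <-> frac_part t2 <= frac_part r2) ->
  forall z, (r1 - t1 <= IZR z <-> r2 - t2 <= IZR z) /\ (r1 - t1 < IZR z <-> r2 - t2 < IZR z).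
Proof.
  intros [E1 _] [E2 _] A B z.
  pose proof (frac_bounds r1). pose proof (frac_bounds r2).
  pose proof (frac_bounds t1). pose proof (frac_bounds t2).
  assert (e1 : r1 = IZR (Int_part r1) + frac_part r1) by (rewrite frac_eq; ring).
  assert (e2 : r2 = IZR (Int_part r1) + frac_part r2) by (rewrite E1, frac_eq; ring).
  assert (e3 : t1 = IZR (Int_part t1) + frac_part t1) by (rewrite frac_eq; ring).
  assert (e4 : t2 = IZR (Int_part t1) + frac_part t2) by (rewrite E2, frac_eq; ring).
  set (k := (Int_part r1 - Int_part t1)%Z).
  assert (ek : IZR (Int_part r1) - IZR (Int_part t1) = IZR k) by (unfold k; rewrite minus_IZR; ring).
  destruct (Z_lt_le_dec k z) as [h|h].
  - assert (IZR k + 1 <= IZR z) by (replace 1 with (IZR 1) by reflexivity; rewrite <- plus_IZR; apply IZR_le; lia).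
    split; split; intro; lra.
  - destruct (Z.eq_dec k z) as [h'|h'].
    + subst z. split; split; intro k0.
      * assert (frac_part r1 <= frac_part t1) by lra. apply A in H3. lra.
      * assert (frac_part r2 <= frac_part t2) by lra. apply A in H3. lra.
      * assert (~ frac_part t1 <= frac_part r1) by lra. assert (~ frac_part t2 <= frac_part r2) by tauto. lra.
      * assert (~ frac_part t2 <= frac_part r2) by lra. assert (~ frac_part t1 <= frac_part r1) by tauto. lra.
    + assert (IZR z + 1 <= IZR k) by (replace 1 with (IZR 1) by reflexivity; rewrite <- plus_IZR; apply IZR_le; lia).
      split; split; intro; lra.
Qed.

Lemma SR_le0 r s : SR r s -> r <= 0 -> s <= 0.
Proof. intros H h. apply (proj1 (proj1 (SR_cmp r s H 0))). exact h. Qed.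

Lemma new_left M r s e1 e2 : SR r s -> r <= 0 -> Reg M e1 e2 ->
  (forall t1 t2, e1 = Fin t1 -> e2 = Fin t2 -> t1 <= Mr M ->
     (frac_part t1 <= frac_part r <-> frac_part t2 <= frac_part s) /\
     (frac_part r <= frac_part t1 <-> frac_part s <= frac_part t2)) ->
  forall sb c, bnd_abs_le_M M c ->
    (ecmp sb (esub (Fin r) e1) (bnd_ER c) <-> ecmp sb (esub (Fin s) e2) (bnd_ER c)).
Proof.
  intros HS Hr HR HF. pose proof (SR_le0 r s HS Hr) as Hs.
  destruct e1 as [t1| |], e2 as [t2| |]; simpl in HR |- *; try tauto.
  apply fin_lift_abs. intros z Hz. pose proof (abs_bounds M z Hz).
  destruct HR as [[h1 h2]|[h1 [h2 h3]]].
  - split; split; intro; lra.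
  - destruct (HF t1 t2 eq_refl eq_refl h1) as [A B].
    apply diff_det; auto.
Qed.

Lemma new_right M r s e1 e2 : SR r s -> r <= 0 -> Reg M e1 e2 ->
  (forall t1 t2, e1 = Fin t1 -> e2 = Fin t2 -> t1 <= Mr M ->
     (frac_part t1 <= frac_part r <-> frac_part t2 <= frac_part s) /\
     (frac_part r <= frac_part t1 <-> frac_part s <= frac_part t2)) ->
  forall sb c, bnd_abs_le_M M c ->
    (ecmp sb (esub e1 (Fin r)) (bnd_ER c) <-> ecmp sb (esub e2 (Fin s)) (bnd_ER c)).
Proof.
  intros HS Hr HR HF. pose proof (SR_le0 r s HS Hr) as Hs.
  destruct e1 as [t1| |], e2 as [t2| |]; simpl in HR |- *; try tauto.
  apply fin_lift_abs. intros z Hz. pose proof (abs_bounds M z Hz).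
  destruct HR as [[h1 h2]|[h1 [h2 h3]]].
  - split; split; intro; lra.
  - destruct (HF t1 t2 eq_refl eq_refl h1) as [A B].
    apply diff_det; auto.
Qed.

Lemma new_NInf_left M e1 e2 : Reg M e1 e2 -> forall sb c,
    (ecmp sb (esub NInf e1) c <-> ecmp sb (esub NInf e2) c).
Proof. destruct e1, e2; simpl; tauto. Qed.

Lemma new_NInf_right M e1 e2 : Reg M e1 e2 -> forall sb c,
    (ecmp sb (esub e1 NInf) c <-> ecmp sb (esub e2 NInf) c).
Proof. destruct e1, e2; simpl; tauto. Qed.

Definition upd {C : Type} (v : valuation C) (x : C) (a : ER) : valuation C :=
  fun y => if excluded_middle_informative (y = x) then a else v y.

Lemma upd_eq {C} (v : valuation C) x a : upd v x a x = a.
Proof. unfold upd. destruct (excluded_middle_informative (x = x)); congruence. Qed.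

Lemma upd_neq {C} (v : valuation C) x a y : y <> x -> upd v x a y = v y.
Proof. unfold upd. destruct (excluded_middle_informative (y = x)); congruence. Qed.

Lemma val_upd_neq {C} (v : valuation C) x a y : y <> Some x -> val C (upd v x a) y = val C v y.
Proof. destruct y; simpl; auto. intro h. apply upd_neq. congruence. Qed.

Lemma esub_self r : esub (Fin r) (Fin r) = Fin 0.
Proof. simpl. f_equal. ring. Qed.

Lemma upd_step (C : Type) (M : nat) (Cfin : exists l : list C, forall x : C, In x l)
  (v1 v2 : valuation C) (x : C) (a : ER) :
  approxM M v1 v2 -> (a = NInf \/ exists r, a = Fin r /\ r <= 0) ->
  exists b, approxM M (upd v1 x a) (upd v2 x b).
Proof.
  intros H Ha. destruct Cfin as [l Hl].
  pose proof (approx_Reg C M v1 v2 H) as HR.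
  pose proof (approx_c2 C M v1 v2 H) as H2.
  pose proof (approx_c3 C M v1 v2 H) as H3.
  destruct Ha as [-> | [r [-> Hr]]].
  - exists NInf. apply approx_intro.
    + intros y. destruct (classic (y = Some x)) as [->|n].
      * simpl. rewrite !upd_eq. simpl. auto.
      * rewrite !val_upd_neq by auto. apply HR.
    + intros y z sb c Hc. destruct (classic (y = x)) as [->|n1]; destruct (classic (z = x)) as [->|n2];
        rewrite ?upd_eq, ?upd_neq by auto.
      * tauto.
      * apply (new_NInf_left M _ _ (HR (Some z))).
      * apply (new_NInf_right M _ _ (HR (Some y))).
      * apply H2; auto.
    + intros y z r1 r2 s1 s2 E1 E2 L1 L2 F1 F2.
      destruct (classic (y = Some x)) as [->|n1].
      { simpl in E1. rewrite upd_eq in E1. discriminate. }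
      destruct (classic (z = Some x)) as [->|n2].
      { simpl in E2. rewrite upd_eq in E2. discriminate. }
      rewrite val_upd_neq in E1, E2, F1, F2 by auto.
      apply (H3 y z); auto.
  - set (L := None :: map Some (None :: map Some l) : list (option (option C))).
    assert (HL : forall x, In (Some x) L).
    { intros [y|]; unfold L; right; apply in_map; [right; apply in_map; auto | left; auto]. }
    set (P := fun i : option (option C) => match i with None => True | Some x =>
                exists r s, val C v1 x = Fin r /\ r <= Mr M /\ val C v2 x = Fin s end).
    set (f := fun i : option (option C) => match i with None => 1 | Some x =>
                match val C v1 x with Fin r => frac_part r | _ => 0 end end).
    set (g := fun i : option (option C) => match i with None => 1 | Some x =>
                match val C v2 x with Fin r => frac_part r | _ => 0 end end).
    assert (HO : forall i j, In i L -> P i -> In j L -> P j -> (f i <= f j <-> g i <= g j)).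
    { intros [y|] [z|] _ Pi _ Pj; simpl in Pi, Pj |- *.
      - destruct Pi as [r1 [s1 [E1 [L1 F1]]]]. destruct Pj as [r2 [s2 [E2 [L2 F2]]]].
        rewrite E1, E2, F1, F2. apply (H3 y z); auto; rewrite Mr_INR; auto.
      - destruct Pi as [r1 [s1 [E1 [L1 F1]]]]. rewrite E1, F1.
        pose proof (frac_bounds r1). pose proof (frac_bounds s1). split; intro; lra.
      - destruct Pj as [r2 [s2 [E2 [L2 F2]]]]. rewrite E2, F2.
        pose proof (frac_bounds r2). pose proof (frac_bounds s2). split; intro; lra.
      - tauto. }
    set (u := frac_part r).
    assert (Hu : 0 <= u < 1) by apply frac_bounds.
    destruct (ext_point L P f g HO u) as [w Hw].
    assert (Hw1 : w < 1).
    { destruct (Hw None) as [A B]; [left; auto| simpl; auto|]. simpl in A.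
      destruct (Rlt_dec w 1); auto. exfalso. assert (1 <= w) by lra. apply A in H0. lra. }
    assert (Hw0 : 0 <= w /\ (u <= 0 <-> w <= 0)).
    { destruct (Hw (Some None)) as [A B]; [apply HL| simpl; exists 0, 0; split; auto; split; auto; apply Mr_pos|].
      simpl in A, B. rewrite frac0 in A, B. split; [apply A; lra | tauto]. }
    set (s := IZR (Int_part r) + w).
    assert (Fs : Int_part s = Int_part r) by (apply fl_unique; unfold s; lra).
    assert (Gs : frac_part s = w) by (rewrite frac_eq, Fs; unfold s; ring).
    assert (HS : SR r s).
    { split; auto. rewrite Gs. fold u. destruct Hw0 as [W0 W1]. split; intro hh.
      - assert (k : u <= 0) by lra. apply W1 in k. lra.
      - assert (k : w <= 0) by lra. apply W1 in k. lra. }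
    assert (Hext : forall y t1 t2, val C v1 y = Fin t1 -> val C v2 y = Fin t2 -> t1 <= Mr M ->
               (frac_part t1 <= frac_part r <-> frac_part t2 <= frac_part s) /\
               (frac_part r <= frac_part t1 <-> frac_part s <= frac_part t2)).
    { intros y t1 t2 E1 E2 Lt. rewrite Gs. destruct (Hw (Some y)) as [A B]; [apply HL| |].
      - simpl. exists t1, t2. auto.
      - simpl in A, B. rewrite E1, E2 in A, B. auto. }
    exists (Fin s). apply approx_intro.
    + intros y. destruct (classic (y = Some x)) as [->|n].
      * simpl. rewrite !upd_eq. apply Reg_of_SR; auto.
      * rewrite !val_upd_neq by auto. apply HR.
    + intros y z sb c Hc. destruct (classic (y = x)) as [->|n1]; destruct (classic (z = x)) as [->|n2];
        rewrite ?upd_eq, ?upd_neq by auto.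
      * rewrite !esub_self. tauto.
      * apply (new_left M r s _ _ HS Hr (HR (Some z))); auto.
        intros t1 t2 e1 e2 h. apply (Hext (Some z)); auto.
      * apply (new_right M r s _ _ HS Hr (HR (Some y))); auto.
        intros t1 t2 e1 e2 h. apply (Hext (Some y)); auto.
      * apply H2; auto.
    + assert (Hd : forall y r1 s1, val C (upd v1 x (Fin r)) y = Fin r1 -> val C (upd v2 x (Fin s)) y = Fin s1 ->
                (r1 = r /\ s1 = s) \/ (val C v1 y = Fin r1 /\ val C v2 y = Fin s1)).
      { intros y r1 s1 E1 F1. destruct (classic (y = Some x)) as [->|n].
        - simpl in E1, F1. rewrite upd_eq in E1, F1. left. split; congruence.
        - right. rewrite val_upd_neq in E1, F1 by auto. auto. }
      intros y z r1 r2 s1 s2 E1 E2 L1 L2 F1 F2. rewrite Mr_INR in L1, L2.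
      destruct (Hd y r1 s1 E1 F1) as [[-> ->]|[A1 B1]]; destruct (Hd z r2 s2 E2 F2) as [[-> ->]|[A2 B2]].
      * split; intro; lra.
      * destruct (Hext z r2 s2 A2 B2 L2) as [K1 K2]; tauto.
      * destruct (Hext y r1 s1 A1 B1 L1) as [K1 K2]; tauto.
      * apply (H3 y z); auto; rewrite Mr_INR; auto.
Qed.

Lemma multi (C : Type) (M : nat) (Cfin : exists l : list C, forall x : C, In x l) :
  forall k (u1 u2 w1 : valuation C), approxM M u1 u2 ->
  (forall y, ~ In y k -> w1 y = u1 y) ->
  (forall y, In y k -> w1 y = NInf \/ exists r, w1 y = Fin r /\ r <= 0) ->
  exists w2, (forall y, ~ In y k -> w2 y = u2 y) /\ approxM M w1 w2.
Proof.
  induction k as [|x k IH]; intros u1 u2 w1 H Hout Hin.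
  - assert (w1 = u1) by (apply functional_extensionality; intro y; apply Hout; simpl; auto).
    subst. exists u2. split; auto.
  - destruct (upd_step C M Cfin u1 u2 x (w1 x) H (Hin x (or_introl eq_refl))) as [b Hb].
    destruct (IH (upd u1 x (w1 x)) (upd u2 x b) w1 Hb) as [w2 [A B]].
    + intros y hy. destruct (classic (y = x)) as [->|n].
      * rewrite upd_eq; auto.
      * rewrite upd_neq by auto. apply Hout. simpl. intros [e|e]; [congruence|tauto].
    + intros y hy. apply Hin. simpl; auto.
    + exists w2. split; auto. intros y hy. simpl in hy. rewrite A by tauto.
      apply upd_neq. intro e; subst; tauto.
Qed.

Lemma change_sim (C : Type) (isF : C -> bool) (M : nat) (Cfin : exists l : list C, forall x : C, In x l)
  (Rs : list C) (v1 v2 w1 : valuation C) :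
  approxM M v1 v2 -> in_change C isF Rs v1 w1 -> exists w2, in_change C isF Rs v2 w2 /\ approxM M w1 w2.
Proof.
  intros H [Hw1 Hc].
  destruct (multi C M Cfin Rs v1 v2 w1 H) as [w2 [A B]].
  - intros y hy. apply (proj2 (Hc y)). auto.
  - intros y hy. specialize (Hw1 y). destruct (isF y) eqn:E.
    + destruct Hw1 as [h|[r [h1 h2]]]; auto. right; exists r; auto.
    + right. exists 0. split; [apply (proj1 (Hc y)); auto | lra].
  - exists w2. split; auto. split.
    + apply (approx_valid C M isF w1 w2); auto.
    + intros y. split.
      * intros hy hF. assert (E : w1 y = Fin 0) by (apply (proj1 (Hc y)); auto).
        pose proof (approx_Reg C M w1 w2 B (Some y)) as Ry. simpl in Ry. rewrite E in Ry.
        destruct (w2 y) as [t| |]; simpl in Ry; try tauto.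
        pose proof (Mr_pos M).
        destruct Ry as [[a b]|[a [b c]]]; [lra|].
        destruct (SR_cmp 0 t c 0) as [K1 K2].
        assert (t <= 0) by (apply K1; lra).
        assert (~ t < 0) by (intro k; apply K2 in k; lra).
        f_equal; lra.
      * intros hy. apply A; auto.
Qed.

Lemma prog_sim (C : Type) (isF : C -> bool) (M : nat) (Cfin : exists l : list C, forall x : C, In x l) :
  forall (p : program C),
  (forall g a z, In (IGuard g) p -> In a g -> ac a = BZ z -> (Z.abs z <= Z.of_nat M)%Z) ->
  forall v1 v2 v1', approxM M v1 v2 -> prog_sem C isF p v1 v1' ->
  exists v2', prog_sem C isF p v2 v2' /\ approxM M v1' v2'.
Proof.
  induction p as [|[g|Rs] p IH]; intros Hg v1 v2 v1' H Hp; simpl in Hp.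
  - subst. exists v2. simpl. auto.
  - destruct Hp as [Hs Hp].
    destruct (IH (fun g' a z h => Hg g' a z (or_intror h)) v1 v2 v1' H Hp) as [v2' [A B]].
    exists v2'. simpl. split; auto. split; auto.
    unfold sat in *. rewrite Forall_forall in *. intros a ha. specialize (Hs a ha).
    unfold sat_atom in *. destruct H as [_ [H2 _]].
    apply (H2 (ax a) (ay a) (astrict a) (ac a)); auto.
    destruct (ac a) eqn:E; simpl; auto. apply (Hg g a z); simpl; auto.
  - destruct Hp as [w1 [Hc Hp]].
    destruct (change_sim C isF M Cfin Rs v1 v2 w1 H Hc) as [w2 [Hc2 Hw]].
    destruct (IH (fun g' a z h => Hg g' a z (or_intror h)) w1 w2 v1' Hw Hp) as [v2' [A B]].
    exists v2'. simpl. split; auto. exists w2. auto.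
Qed.

Theorem lemma8 (Q Sigma C : Type) (isF : C -> bool)
  (Cfin : exists l : list C, forall x : C, In x l)
  (A : GTA Q Sigma C) (M : nat)
  (Hsafe : safe isF A) (HM : consts_bounded A M) :
  forall v1 v2 : valuation C,
    is_valuation C isF v1 -> is_valuation C isF v2 -> approxM M v1 v2 ->
    (* (a) time elapse, both directions *)
    (forall d1 : R, 0 <= d1 -> is_valuation C isF (delay C v1 d1) ->
       exists d2 : R, 0 <= d2 /\ is_valuation C isF (delay C v2 d2) /\
                      approxM M (delay C v1 d1) (delay C v2 d2)) /\
    (forall d2 : R, 0 <= d2 -> is_valuation C isF (delay C v2 d2) ->
       exists d1 : R, 0 <= d1 /\ is_valuation C isF (delay C v1 d1) /\
                      approxM M (delay C v1 d1) (delay C v2 d2)) /\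
    (* (b) discrete transitions, both directions *)
    (forall t, In t (gta_trans A) -> forall (q q' : Q) (v1' : valuation C),
       gstep isF t q v1 q' v1' ->
       exists v2', gstep isF t q v2 q' v2' /\ approxM M v1' v2') /\
    (forall t, In t (gta_trans A) -> forall (q q' : Q) (v2' : valuation C),
       gstep isF t q v2 q' v2' ->
       exists v1', gstep isF t q v1 q' v1' /\ approxM M v1' v2').
Proof.
  intros v1 v2 Hv1 Hv2 H.
  pose proof (approx_sym C M v1 v2 H) as Hs.
  assert (Hg : forall t, In t (gta_trans A) -> forall g a z, In (IGuard g) (tprog t) -> In a g ->
              ac a = BZ z -> (Z.abs z <= Z.of_nat M)%Z).
  { intros t Ht g a z h1 h2 h3. apply (HM g a z); auto. right. exists t. auto. }
  split; [|split; [|split]].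
  - intros d1 hd1 Hvd. destruct (delay_sim C M Cfin v1 v2 d1 H hd1) as [d2 [hd2 Hd]].
    exists d2. split; auto. split; auto. apply (approx_valid C M isF (delay C v1 d1)); auto.
  - intros d2 hd2 Hvd. destruct (delay_sim C M Cfin v2 v1 d2 Hs hd2) as [d1 [hd1 Hd]].
    exists d1. split; auto. split.
    + apply (approx_valid C M isF (delay C v2 d2)); auto.
    + apply approx_sym; auto.
  - intros t Ht q q' v1' [E1 [E2 Hp]].
    destruct (prog_sim C isF M Cfin (tprog t) (Hg t Ht) v1 v2 v1' H Hp) as [v2' [A1 B1]].
    exists v2'. split; auto. split; auto.
  - intros t Ht q q' v2' [E1 [E2 Hp]].
    destruct (prog_sim C isF M Cfin (tprog t) (Hg t Ht) v2 v1 v2' Hs Hp) as [v1' [A1 B1]].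
    exists v1'. split; [split; auto|]. apply approx_sym; auto.
Qed.
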